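(* Let $\rho,\sigma,\alpha\in\mathbb{F}\setminus\{\frac12\}$, and let $\mathbf{A}$ be the 5-dimensional LV algebra with natural basis $e_1,\dots,e_5$ in which $e_1e_2=\rho e_1+(1-\rho)e_2$, $e_2e_3=\sigma e_2+(1-\sigma)e_3$, $e_3e_4=\alpha e_3+(1-\alpha)e_4$, $e_3e_5=\alpha e_3+(1-\alpha)e_5$, and $e_ie_j=\frac12(e_i+e_j)$ for all other pairs $i,j$. Then $\mathrm{Der}(\mathbf{A})=\{f\in L(\mathbf{A}) : f(e_1)=f(e_2)=f(e_3)=0 \text{ and } \mathrm{Im}(f)\subseteq\langle e_4-e_5\rangle\}$.
   Context: Let $\mathbb{F}$ be a field of characteristic different from $2$. A Lotka–Volterra (LV) algebra of dimension $5$ over $\mathbb{F}$ is a commutative (not necessarily associative) $\mathbb{F}$-algebra $\mathbf{A}$ with a basis $e_1,\dots,e_5$ (the natural basis) such that $e_ie_j=\alpha_{ij}e_i+\alpha_{ji}e_j$ with $\alpha_{ij}\in\mathbb{F}$, $\alpha_{ii}=\frac12$ and $\alpha_{ij}+\alpha_{ji}=1$ for all $i,j$. A derivation is a linear map $D:\mathbf{A}\to\mathbf{A}$ with $D(uv)=D(u)v+uD(v)$ for all $u,v$; $\mathrm{Der}(\mathbf{A})$ is the set of derivations, $L(\mathbf{A})$ the set of linear maps $\mathbf{A}\to\mathbf{A}$, and $\langle x_1,\dots,x_k\rangle$ the linear span. *)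

(* Defs.v *)
From HB Require Import structures.
From mathcomp Require Import all_boot all_order all_algebra.
Set Implicit Arguments. Unset Strict Implicit. Unset Printing Implicit Defensive.
Import GRing.Theory.
Local Open Scope ring_scope.

(* Elements of a 5-dim algebra over F are row vectors 'rV[F]_5 in the
   natural basis e_0..e_4 (paper's e_1..e_5); e i = delta_mx 0 i. *)
Definition e (F : fieldType) (i : 'I_5) : 'rV[F]_5 := delta_mx 0 i.

Definition lv_mul (F : fieldType) (a : 'I_5 -> 'I_5 -> F) (u v : 'rV[F]_5)
  : 'rV[F]_5 :=
  \sum_(i < 5) \sum_(j < 5) (u 0 i * v 0 j) *: (a i j *: e F i + a j i *: e F j).

(* Linear maps A -> A are matrices acting on row vectors: f(v) = v *m M. *)
Definition is_derivation (F : fieldType) (a : 'I_5 -> 'I_5 -> F)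
  (M : 'M[F]_5) : Prop :=
  forall u v : 'rV[F]_5,
    lv_mul a u v *m M = lv_mul a (u *m M) v + lv_mul a u (v *m M).

(* The table of the theorem (0-indexed: paper e_k is index k-1). *)
Definition thm7_table (F : fieldType) (rho sigma alpha : F)
  (i j : 'I_5) : F :=
  match nat_of_ord i, nat_of_ord j with
  | 0%N, 1%N => rho   | 1%N, 0%N => 1 - rho
  | 1%N, 2%N => sigma | 2%N, 1%N => 1 - sigma
  | 2%N, 3%N => alpha | 3%N, 2%N => 1 - alpha
  | 2%N, 4%N => alpha | 4%N, 2%N => 1 - alpha
  | _, _ => 2%:R^-1
  end.

(* Main.v *)
Require Import Defs.
From HB Require Import structures.
From mathcomp Require Import all_boot all_order all_algebra.
From mathcomp Require Import ring.
Set Implicit Arguments. Unset Strict Implicit.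
Import GRing.Theory.
Local Open Scope ring_scope.

Lemma sum5 (R : nmodType) (f : 'I_5 -> R) :
  \sum_(l < 5) f l = f (inord 0) + f (inord 1) + f (inord 2) + f (inord 3) + f (inord 4).
Proof.
rewrite (eq_bigr (fun l : 'I_5 => f (inord (val l)))); last by move=> l _; rewrite inord_val.
rewrite -(big_mkord xpredT (fun n => f (inord n))).
by rewrite /index_iota /= !big_cons big_nil addr0 !addrA.
Qed.

Lemma eqI (a b : nat) : (a < 5)%N -> (b < 5)%N -> (inord a == inord b :> 'I_5) = (a == b).
Proof. by move=> ha hb; rewrite -val_eqE /= !inordK. Qed.

Lemma case5 (P : 'I_5 -> Prop) : P (inord 0) -> P (inord 1) -> P (inord 2) ->
  P (inord 3) -> P (inord 4) -> forall k, P k.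
Proof.
move=> h0 h1 h2 h3 h4 k; rewrite -[k]inord_val; move: (ltn_ord k).
by case: (nat_of_ord k) => [|[|[|[|[|n]]]]].
Qed.

Lemma eE (F : fieldType) i l : (e F i) 0 l = (i == l)%:R.
Proof. by rewrite mxE eqxx eq_sym. Qed.

Lemma lvE (F : fieldType) (a : 'I_5 -> 'I_5 -> F) u v k :
  (lv_mul a u v) 0 k = u 0 k * \sum_l v 0 l * a k l + v 0 k * \sum_l u 0 l * a k l.
Proof.
rewrite /lv_mul summxE.
rewrite (eq_bigr (fun i => \sum_j (u 0 i * v 0 j) * (a i j * (i == k)%:R + a j i * (j == k)%:R))); last first.
  move=> i _; rewrite summxE; apply: eq_bigr => j _; by rewrite !mxE eqxx /= (eq_sym k i) (eq_sym k j).
rewrite (eq_bigr (fun i => (\sum_j u 0 i * v 0 j * a i j * (i == k)%:R) + \sum_j u 0 i * v 0 j * a j i * (j == k)%:R)); last first.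
  by move=> i _; rewrite -big_split; apply: eq_bigr => j _; rewrite mulrDr !mulrA.
rewrite big_split /=; congr (_ + _).
  rewrite (bigD1 k) //= [X in _ + X]big1 ?addr0; last first.
    by move=> i /negbTE hik; apply: big1 => j _; rewrite hik mulr0.
  rewrite big_distrr /=; apply: eq_bigr => j _; rewrite eqxx mulr1; ring.
rewrite exchange_big (bigD1 k) //= [X in _ + X]big1 ?addr0; last first.
  by move=> j /negbTE hjk; apply: big1 => i _; rewrite hjk mulr0.
rewrite big_distrr /=; apply: eq_bigr => i _; rewrite eqxx mulr1; ring.
Qed.

Lemma mulE (F : fieldType) (w : 'rV[F]_5) (M : 'M[F]_5) k :
  (w *m M) 0 k = \sum_l w 0 l * M l k.
Proof. by rewrite mxE. Qed.

Lemma eM (F : fieldType) (M : 'M[F]_5) i : e F i *m M = row i M.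
Proof. by rewrite rowE. Qed.

Lemma sumd (R : semiRingType) (f : 'I_5 -> R) i : \sum_l (i == l)%:R * f l = f i.
Proof.
rewrite (bigD1 i) //= eqxx mul1r big1 ?addr0 // => l /negbTE.
by rewrite eq_sym => ->; rewrite mul0r.
Qed.

Lemma row0E (F : fieldType) (M : 'M[F]_5) i l : (row i M) 0 l = M i l.
Proof. by rewrite mxE. Qed.

Lemma sume (F : fieldType) (f : 'I_5 -> F) i : \sum_l (e F i) 0 l * f l = f i.
Proof. by rewrite -(@sumd F f i); apply: eq_bigr => l _; rewrite eE. Qed.

Lemma basisEq (F : fieldType) (a : 'I_5 -> 'I_5 -> F) (M : 'M[F]_5)
  (H : is_derivation a M) i j k :
  a i j * M i k + a j i * M j k = M i k * a k j + (j == k)%:R * (\sum_l M i l * a k l)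
   + ((i == k)%:R * (\sum_l M j l * a k l) + M j k * a k i).
Proof.
have := congr1 (fun w : 'rV_5 => w 0 k) (H (e F i) (e F j)).
have L : \sum_l (lv_mul a (e F i) (e F j)) 0 l * M l k = a i j * M i k + a j i * M j k.
  rewrite (eq_bigr (fun l => (i == l)%:R * (a l j * M l k) + (j == l)%:R * (a l i * M l k))).
    by rewrite big_split /= !sumd.
  move=> l _; rewrite !lvE !sume !eE; ring.
rewrite /= mxE L [in X in _ = X -> _]mxE !lvE !eM !row0E !sume !eE => ->.
by congr (_ + _ * _ + (_ * _ + _)); apply: eq_bigr => l _; rewrite row0E.
Qed.

Lemma slv (F : fieldType) (A B P c : F) : A = B -> P = c * (A - B) -> P = 0.
Proof. by move=> -> ->; rewrite subrr mulr0. Qed.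

Lemma nz (F : fieldType) (t x : F) : t != 2%:R^-1 -> x * (t - 2%:R^-1) = 0 -> x = 0.
Proof. by move=> ht /eqP; rewrite mulf_eq0 subr_eq0 (negbTE ht) orbF => /eqP. Qed.

Ltac gE Hd i j k := have := basisEq Hd (inord i%N) (inord j%N) (inord k%N);
  rewrite !sum5 /thm7_table !inordK // !eqI //=.

Theorem mainTheorem7 (F : fieldType) (hF : (2%:R : F) != 0)
  (rho sigma alpha : F)
  (hrho : rho != 2%:R^-1) (hsigma : sigma != 2%:R^-1)
  (halpha : alpha != 2%:R^-1) (M : 'M[F]_5) :
  is_derivation (thm7_table rho sigma alpha) M <->
  (e F (inord 0) *m M = 0 /\ e F (inord 1) *m M = 0 /\ e F (inord 2) *m M = 0 /\
   forall v : 'rV[F]_5, exists c : F,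
     v *m M = c *: (e F (inord 3) - e F (inord 4))).
Proof.
split.
  move=> Hd.
have h01 : M (inord 0) (inord 1) = 0.
  apply: (nz hrho); gE Hd 0%N 0%N 1%N; move=> Eq; apply: (slv Eq (c := 2%:R^-1)); by field.
have h10 : M (inord 1) (inord 0) = 0.
  apply: (nz hrho); gE Hd 1%N 1%N 0%N; move=> Eq; rewrite ?h01 in Eq; apply: (slv Eq (c := -2%:R^-1)); by field.
have h12 : M (inord 1) (inord 2) = 0.
  apply: (nz hsigma); gE Hd 1%N 1%N 2%N; move=> Eq; rewrite ?h01 ?h10 in Eq; apply: (slv Eq (c := 2%:R^-1)); by field.
have h21 : M (inord 2) (inord 1) = 0.
  apply: (nz hsigma); gE Hd 2%N 2%N 1%N; move=> Eq; rewrite ?h01 ?h10 ?h12 in Eq; apply: (slv Eq (c := -2%:R^-1)); by field.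
have h23 : M (inord 2) (inord 3) = 0.
  apply: (nz halpha); gE Hd 2%N 2%N 3%N; move=> Eq; rewrite ?h01 ?h10 ?h12 ?h21 in Eq; apply: (slv Eq (c := 2%:R^-1)); by field.
have h24 : M (inord 2) (inord 4) = 0.
  apply: (nz halpha); gE Hd 2%N 2%N 4%N; move=> Eq; rewrite ?h01 ?h10 ?h12 ?h21 ?h23 in Eq; apply: (slv Eq (c := 2%:R^-1)); by field.
have h32 : M (inord 3) (inord 2) = 0.
  apply: (nz halpha); gE Hd 3%N 3%N 2%N; move=> Eq; rewrite ?h01 ?h10 ?h12 ?h21 ?h23 ?h24 in Eq; apply: (slv Eq (c := -2%:R^-1)); by field.
have h42 : M (inord 4) (inord 2) = 0.
  apply: (nz halpha); gE Hd 4%N 4%N 2%N; move=> Eq; rewrite ?h01 ?h10 ?h12 ?h21 ?h23 ?h24 ?h32 in Eq; apply: (slv Eq (c := -2%:R^-1)); by field.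
have h03 : M (inord 0) (inord 3) = 0.
  apply: (nz halpha); gE Hd 0%N 2%N 3%N; move=> Eq; rewrite ?h01 ?h10 ?h12 ?h21 ?h23 ?h24 ?h32 ?h42 in Eq; apply: (slv Eq (c := 1)); by field.
have h04 : M (inord 0) (inord 4) = 0.
  apply: (nz halpha); gE Hd 0%N 2%N 4%N; move=> Eq; rewrite ?h01 ?h10 ?h12 ?h21 ?h23 ?h24 ?h32 ?h42 ?h03 in Eq; apply: (slv Eq (c := 1)); by field.
have h31 : M (inord 3) (inord 1) = 0.
  apply: (nz hrho); gE Hd 0%N 3%N 1%N; move=> Eq; rewrite ?h01 ?h10 ?h12 ?h21 ?h23 ?h24 ?h32 ?h42 ?h03 ?h04 in Eq; apply: (slv Eq (c := 1)); by field.
have h41 : M (inord 4) (inord 1) = 0.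
  apply: (nz hrho); gE Hd 0%N 4%N 1%N; move=> Eq; rewrite ?h01 ?h10 ?h12 ?h21 ?h23 ?h24 ?h32 ?h42 ?h03 ?h04 ?h31 in Eq; apply: (slv Eq (c := 1)); by field.
have h02 : M (inord 0) (inord 2) = 0.
  apply: (nz halpha); gE Hd 0%N 3%N 2%N; move=> Eq; rewrite ?h01 ?h10 ?h12 ?h21 ?h23 ?h24 ?h32 ?h42 ?h03 ?h04 ?h31 ?h41 in Eq; apply: (slv Eq (c := -1)); by field.
have h30 : M (inord 3) (inord 0) = 0.
  apply: (nz hrho); gE Hd 1%N 3%N 0%N; move=> Eq; rewrite ?h01 ?h10 ?h12 ?h21 ?h23 ?h24 ?h32 ?h42 ?h03 ?h04 ?h31 ?h41 ?h02 in Eq; apply: (slv Eq (c := -1)); by field.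
have h40 : M (inord 4) (inord 0) = 0.
  apply: (nz hrho); gE Hd 1%N 4%N 0%N; move=> Eq; rewrite ?h01 ?h10 ?h12 ?h21 ?h23 ?h24 ?h32 ?h42 ?h03 ?h04 ?h31 ?h41 ?h02 ?h30 in Eq; apply: (slv Eq (c := -1)); by field.
have h00 : M (inord 0) (inord 0) = 0.
  gE Hd 0%N 0%N 0%N; move=> Eq; rewrite ?h01 ?h10 ?h12 ?h21 ?h23 ?h24 ?h32 ?h42 ?h03 ?h04 ?h31 ?h41 ?h02 ?h30 ?h40 in Eq; apply: (slv Eq (c := -1)); by field.
have h13 : M (inord 1) (inord 3) = 0.
  apply: (nz hrho); gE Hd 0%N 1%N 3%N; move=> Eq; rewrite ?h01 ?h10 ?h12 ?h21 ?h23 ?h24 ?h32 ?h42 ?h03 ?h04 ?h31 ?h41 ?h02 ?h30 ?h40 ?h00 in Eq; apply: (slv Eq (c := -1)); by field.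
have h14 : M (inord 1) (inord 4) = 0.
  apply: (nz hrho); gE Hd 0%N 1%N 4%N; move=> Eq; rewrite ?h01 ?h10 ?h12 ?h21 ?h23 ?h24 ?h32 ?h42 ?h03 ?h04 ?h31 ?h41 ?h02 ?h30 ?h40 ?h00 ?h13 in Eq; apply: (slv Eq (c := -1)); by field.
have h11 : M (inord 1) (inord 1) = 0.
  gE Hd 1%N 1%N 1%N; move=> Eq; rewrite ?h01 ?h10 ?h12 ?h21 ?h23 ?h24 ?h32 ?h42 ?h03 ?h04 ?h31 ?h41 ?h02 ?h30 ?h40 ?h00 ?h13 ?h14 in Eq; apply: (slv Eq (c := -1)); by field.
have h20 : M (inord 2) (inord 0) = 0.
  apply: (nz halpha); gE Hd 2%N 3%N 0%N; move=> Eq; rewrite ?h01 ?h10 ?h12 ?h21 ?h23 ?h24 ?h32 ?h42 ?h03 ?h04 ?h31 ?h41 ?h02 ?h30 ?h40 ?h00 ?h13 ?h14 ?h11 in Eq; apply: (slv Eq (c := 1)); by field.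
have h22 : M (inord 2) (inord 2) = 0.
  gE Hd 2%N 2%N 2%N; move=> Eq; rewrite ?h01 ?h10 ?h12 ?h21 ?h23 ?h24 ?h32 ?h42 ?h03 ?h04 ?h31 ?h41 ?h02 ?h30 ?h40 ?h00 ?h13 ?h14 ?h11 ?h20 in Eq; apply: (slv Eq (c := -1)); by field.
have h3s : M (inord 3) (inord 3) + M (inord 3) (inord 4) = 0.
  gE Hd 3%N 3%N 3%N; move=> Eq; rewrite ?h01 ?h10 ?h12 ?h21 ?h23 ?h24 ?h32 ?h42 ?h03 ?h04 ?h31 ?h41 ?h02 ?h30 ?h40 ?h00 ?h13 ?h14 ?h11 ?h20 ?h22 in Eq; apply: (slv Eq (c := -1)); by field.
have h4s : M (inord 4) (inord 3) + M (inord 4) (inord 4) = 0.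
  gE Hd 4%N 4%N 4%N; move=> Eq; rewrite ?h01 ?h10 ?h12 ?h21 ?h23 ?h24 ?h32 ?h42 ?h03 ?h04 ?h31 ?h41 ?h02 ?h30 ?h40 ?h00 ?h13 ?h14 ?h11 ?h20 ?h22 ?h3s in Eq; apply: (slv Eq (c := -1)); by field.
  have h34 : M (inord 3) (inord 4) = - M (inord 3) (inord 3) by apply/eqP; rewrite -subr_eq0 opprK addrC h3s.
  have h44 : M (inord 4) (inord 4) = - M (inord 4) (inord 3) by apply/eqP; rewrite -subr_eq0 opprK addrC h4s.
  split; [|split; [|split]].
  - by rewrite eM; apply/rowP; apply: case5; rewrite !mxE ?h00 ?h01 ?h02 ?h03 ?h04.
  - by rewrite eM; apply/rowP; apply: case5; rewrite !mxE ?h10 ?h11 ?h12 ?h13 ?h14.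
  - by rewrite eM; apply/rowP; apply: case5; rewrite !mxE ?h20 ?h21 ?h22 ?h23 ?h24.
  move=> v; exists (\sum_i v 0 i * M i (inord 3)).
  apply/rowP; apply: case5; rewrite !mxE !sum5 !eqI //= ?h01 ?h10 ?h12 ?h21 ?h23 ?h24 ?h32 ?h42 ?h03 ?h04 ?h31 ?h41 ?h02 ?h30 ?h40 ?h00 ?h13 ?h14 ?h11 ?h20 ?h22 ?h3s ?h4s ?h34 ?h44; ring.
move=> [R0 [R1 [R2 R4]]].
have z0 : forall k, M (inord 0) k = 0.
  by move=> k; have := congr1 (fun w : 'rV_5 => w 0 k) R0; rewrite eM row0E mxE.
have z1 : forall k, M (inord 1) k = 0.
  by move=> k; have := congr1 (fun w : 'rV_5 => w 0 k) R1; rewrite eM row0E mxE.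
have z2 : forall k, M (inord 2) k = 0.
  by move=> k; have := congr1 (fun w : 'rV_5 => w 0 k) R2; rewrite eM row0E mxE.
have [c3 h3] := R4 (e F (inord 3)).
have [c4 h4] := R4 (e F (inord 4)).
have f3 : forall k, M (inord 3) k = c3 * ((inord 3 == k)%:R - (inord 4 == k)%:R).
  move=> k; have := congr1 (fun w : 'rV_5 => w 0 k) h3; rewrite eM row0E !mxE /= => ->.
  by rewrite ![k == _]eq_sym.
have f4 : forall k, M (inord 4) k = c4 * ((inord 3 == k)%:R - (inord 4 == k)%:R).
  move=> k; have := congr1 (fun w : 'rV_5 => w 0 k) h4; rewrite eM row0E !mxE /= => ->.
  by rewrite ![k == _]eq_sym.
move=> u v; apply/rowP; apply: case5.
all: rewrite [LHS]mulE sum5 [RHS]mxE !lvE !sum5 !mulE !sum5 !z0 !z1 !z2 !f3 !f4 !eqI //=.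
all: rewrite /thm7_table !inordK //=.
all: by field.
Qed.
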